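(* Let $a,b\in\mathbb{N}$ with $a\equiv b\equiv 1\pmod 2$ (no coprimality assumed). Then $$s_{5}(a,b)+s_{5}(b,a)=\frac{1}{2}-\frac{(a,b)^{2}}{2ab}.$$
   Context: For $a,b\in\mathbb{Z}$ with $b\neq0$, the Hardy–Berndt sum is $s_{5}(a,b)=\sum_{r=0}^{|b|-1}(-1)^{r+[\frac{ar}{b}]}\left(\left(\frac{r}{b}\right)\right)$, where $[x]$ is the floor of $x$, $\{x\}=x-[x]$, and $((x))=\{x\}-\tfrac12$ for $x\notin\mathbb{Z}$, $((x))=0$ for $x\in\mathbb{Z}$. $(a,b)$ is the greatest common divisor. *)

(* Defs.v *)
From mathcomp Require Import all_boot all_order all_algebra.
Set Implicit Arguments. Unset Strict Implicit. Unset Printing Implicit Defensive.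
Import Order.TTheory GRing.Theory Num.Theory.
Local Open Scope ring_scope.

Definition sawtooth (x : rat) : rat :=
  if x \is a Num.int then 0 else x - (Num.floor x)%:~R - 1 / 2.

Definition s5 (a b : int) : rat :=
  \sum_(r < `|b|%N)
     ((-1 : rat) ^ (r%:Z + Num.floor ((a%:~R * r%:R) / b%:~R : rat))) *
     sawtooth (r%:R / b%:~R).

(* Main.v *)
Require Import Defs.
From mathcomp Require Import all_boot all_order all_algebra.
From mathcomp Require Import zify ring lra.
Import Order.TTheory GRing.Theory Num.Theory.
Local Open Scope ring_scope.

Lemma split_sum m n (F : nat -> rat) :
  \sum_(0 <= i < m * n) F i = \sum_(0 <= k < m) \sum_(0 <= t < n) F (k * n + t)%N.
Proof.
elim: m => [|m IH]; first by rewrite mul0n !big_geq.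
rewrite big_nat_recr //= -IH (big_cat_nat _ (n := m * n)) //=; last by rewrite mulSn leq_addl.
congr (_ + _).
rewrite mulSn addnC -{1}(add0n (m * n)%N) big_addn addnC addnK.
by apply: eq_bigr => i _; rewrite addnC.
Qed.
Lemma alt_sum_odd p : odd p -> \sum_(i < p) (-1 : rat) ^+ i = 1.
Proof.
move=> hp; rewrite -(odd_double_half p) hp /= add1n.
elim: (p./2) => [|k IH]; first by rewrite big_ord1.
rewrite doubleS 2!big_ord_recr /= IH !exprS -signr_odd odd_double /= expr0.
by rewrite !mulr1 mulN1r opprK addrNK.
Qed.

Lemma crt_sum p q : coprime p q -> odd p -> odd q ->
  \sum_(j < p * q) (-1 : rat) ^+ (j %% p + j %% q) = 1.
Proof.
move=> co hp hq.
have p0 : (0 < p)%N by move: hp; case: (p).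
have q0 : (0 < q)%N by move: hq; case: (q).
have pq0 : (0 < p * q)%N by rewrite muln_gt0 p0.
pose h (x : 'I_p * 'I_q) : 'I_(p * q) := Ordinal (ltn_pmod (chinese p q x.1 x.2) pq0).
pose h' (j : 'I_(p * q)) : 'I_p * 'I_q := (Ordinal (ltn_pmod j p0), Ordinal (ltn_pmod j q0)).
rewrite (reindex h) /=; last first.
  exists h' => [[i k] _|j _]; apply/eqP.
  - rewrite /h /h' /= xpair_eqE; apply/andP; split; apply/eqP/val_inj => /=.
      by rewrite modn_dvdm ?dvdn_mulr // chinese_modl // modn_small.
    by rewrite modn_dvdm ?dvdn_mull // chinese_modr // modn_small.
  - apply/eqP/val_inj => /=; rewrite -[RHS](modn_small (ltn_ord j)).
    by apply/eqP; rewrite chinese_remainder // (chinese_modl co) (chinese_modr co) !modn_mod !eqxx.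
rewrite -(pair_big xpredT xpredT (fun i k => (-1 : rat) ^+ ((h (i, k)) %% p + (h (i, k)) %% q))) /=.
transitivity (\sum_(i < p) \sum_(k < q) (-1 : rat) ^+ i * (-1) ^+ k).
  apply: eq_bigr => i _; apply: eq_bigr => k _; rewrite -exprD /h /=.
  rewrite modn_dvdm ?dvdn_mulr // chinese_modl // modn_small //.
  by rewrite modn_dvdm ?dvdn_mull // chinese_modr // modn_small.
rewrite -big_distrlr /= !alt_sum_odd //; by rewrite mulr1.
Qed.

Lemma sign_odd_eq (x y : nat) : odd x = odd y -> (-1 : rat) ^+ x = (-1) ^+ y.
Proof. by move=> e; rewrite -[LHS]signr_odd e signr_odd. Qed.

Lemma odd_div_odd n a : odd a -> odd (n %/ a) = odd n (+) odd (n %% a).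
Proof. by move=> ha; rewrite {2}(divn_eq n a) oddD oddM ha andbT addbK. Qed.

Lemma modn_split m t k g : (t < g)%N -> (0 < k)%N ->
  ((m * g + t) %% (k * g) = (m %% k) * g + t)%N.
Proof.
move=> tg k0.
have -> : (m * g + t = (m %/ k) * (k * g) + ((m %% k) * g + t))%N.
  by rewrite addnA mulnA -mulnDl -divn_eq.
rewrite modnMDl modn_small //.
apply: (@leq_trans ((m %% k).+1 * g)); first by rewrite mulSn; lia.
by rewrite leq_mul2r ltn_pmod // orbT.
Qed.

Lemma hsum a b : odd a -> odd b ->
  \sum_(0 <= n < a * b) (-1 : rat) ^+ (n %/ a + n %/ b) = ((gcdn a b) ^ 2)%:R.
Proof.
move=> ha hb.
set g := gcdn a b.
have g0 : (0 < g)%N by rewrite gcdn_gt0 odd_gt0.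
have hg : odd g by move: ha; rewrite -(divnK (dvdn_gcdl a b)) oddM; case/andP.
set a' := (a %/ g)%N; set b' := (b %/ g)%N.
have ea : a = (a' * g)%N by rewrite divnK // dvdn_gcdl.
have eb : b = (b' * g)%N by rewrite divnK // dvdn_gcdr.
have ha' : odd a' by move: ha; rewrite ea oddM; case/andP.
have hb' : odd b' by move: hb; rewrite eb oddM; case/andP.
have a0 : (0 < a')%N by apply: odd_gt0.
have b0 : (0 < b')%N by apply: odd_gt0.
have co : coprime a' b'.
  apply/eqP; apply/eqP; rewrite -(eqn_pmul2r g0) muln_gcdl -ea -eb mul1n.
  by [].
transitivity (\sum_(0 <= n < a * b) (-1 : rat) ^+ (n %% a + n %% b)).
  apply: eq_bigr => n _; apply: sign_odd_eq.
  rewrite !oddD !odd_div_odd //.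
  by case: (odd n); case: (odd (n %% a)); case: (odd (n %% b)).
have -> : (a * b = (a' * b' * g) * g)%N by rewrite ea eb; ring.
rewrite split_sum.
transitivity (\sum_(0 <= m < a' * b' * g) (-1 : rat) ^+ (m %% a' + m %% b') *+ g).
  apply: eq_bigr => m _.
  rewrite -[in RHS](subn0 g) -sumr_const_nat; apply: eq_big_nat => t /andP[_ tg].
  rewrite ea eb !modn_split //; apply: sign_odd_eq.
  rewrite !oddD !oddM hg !andbT.
  by case: (odd (m %% a')); case: (odd (m %% b')); case: (odd t).
rewrite sumrMnl.
have -> : (a' * b' * g = g * (a' * b'))%N by ring.
rewrite split_sum.
transitivity ((\sum_(0 <= k < g) 1 : rat) *+ g).
  congr (_ *+ _); apply: eq_bigr => k _.
  rewrite -[RHS](@crt_sum a' b' co ha' hb') -(big_mkord xpredT (fun j => (-1 : rat) ^+ (j %% a' + j %% b'))).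
  apply: eq_bigr => j _.
  have -> : (k * (a' * b') + j = (k * b') * a' + j)%N by ring.
  rewrite modnMDl.
  have -> : ((k * b') * a' + j = (k * a') * b' + j)%N by ring.
  by rewrite modnMDl.
by rewrite sumr_const_nat subn0 -mulrnA mulnn natrX.
Qed.

Lemma floor_nat_div (n b : nat) : (0 < b)%N ->
  Num.floor (n%:R / b%:R : rat) = ((n %/ b)%N)%:Z.
Proof.
move=> b0; have b0' : (0 : rat) < b%:R by rewrite ltr0n.
apply: floor_def; apply/andP; split.
  by rewrite ler_pdivlMr // pmulrn -natrM ler_nat leq_divM.
rewrite ltr_pdivrMr // (_ : (Posz (n %/ b)%N + 1)%R = Posz (n %/ b).+1) ?addn1 //. rewrite -[X in _ < X * _]/((n %/ b).+1%:R) -natrM ltr_nat.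
  exact: ltn_ceil.
by rewrite -addn1 PoszD.
Qed.

Definition saw (r b : nat) : rat := if r == 0%N then 0 else r%:R / b%:R - 1 / 2.

Lemma sawtoothE r b : (r < b)%N -> sawtooth (r%:R / b%:R) = saw r b.
Proof.
move=> rb; have b0 : (0 < b)%N by apply: leq_ltn_trans rb.
rewrite /sawtooth /saw; case: eqP => [->|/eqP r0]; first by rewrite mul0r (_ : (0:rat) \is a Num.int) // intr_int.
have fl : Num.floor (r%:R / b%:R : rat) = 0 by rewrite floor_nat_div // divn_small.
have -> : (r%:R / b%:R : rat) \is a Num.int = false.
  apply/negP => hi; have := floorK hi; rewrite fl => /esym /eqP.
  by rewrite mulf_eq0 invr_eq0 !pnatr_eq0 (negPf r0) /= eqn0Ngt b0.
by rewrite fl subr0.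
Qed.

Lemma s5E a b : (0 < b)%N -> s5 a%:Z b%:Z =
  \sum_(0 <= r < b) (-1 : rat) ^+ (r + (a * r) %/ b) * saw r b.
Proof.
move=> b0; rewrite /s5 absz_nat big_mkord; apply: eq_bigr => r _.
rewrite !pmulrn -natrM floor_nat_div // sawtoothE //.
Qed.

Lemma abel (h : nat -> rat) N c :
  \sum_(0 <= m < N) ((m.+1)%:R - c) * (h m.+1 - h m)
  = N%:R * h N - \sum_(0 <= m < N) h m - c * (h N - h 0%N).
Proof.
elim: N => [|N IH]; first by rewrite !big_geq // mul0r; ring.
rewrite !big_nat_recr //= IH -!natr1; ring.
Qed.

Definition Dn a b n : rat :=
  (a %| n)%:R + (b %| n)%:R - 2 * (a %| n)%:R * (b %| n)%:R.

Definition hh a b n : rat := (-1) ^+ (n %/ a + n %/ b).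

Lemma delta a b m : (0 < a)%N -> (0 < b)%N ->
  hh a b m.+1 - hh a b m = hh a b m.+1 * (2 * Dn a b m.+1).
Proof.
move=> a0 b0; rewrite /hh /Dn !divnS // addnACA exprD.
set s := (-1 : rat) ^+ (m %/ a + m %/ b)%N.
by case: (a %| m.+1)%N; case: (b %| m.+1)%N; rewrite /= ?expr0 ?exprS ?expr0; ring.
Qed.

Lemma sum_dvd a M (F : nat -> rat) : (0 < a)%N ->
  \sum_(0 <= n < M * a) F n * (a %| n)%:R = \sum_(0 <= r < M) F (r * a)%N.
Proof.
move=> a0; rewrite split_sum; apply: eq_bigr => r _.
case: a a0 => // a _.
rewrite big_nat_recl // addn0 dvdn_mull // mulr1 big1_seq ?addr0 // => t.
rewrite /= mem_index_iota => /andP[_ ta].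
by rewrite dvdn_addr ?dvdn_mull // gtnNdvd // mulr0.
Qed.

Lemma partA a b : odd a -> odd b ->
  \sum_(0 <= n < a * b) (n%:R - (a * b)%:R / 2) * hh a b n * (a %| n)%:R
  = (a * b)%:R * s5 a%:Z b%:Z - (a * b)%:R / 2.
Proof.
move=> ha hb; have a0 := odd_gt0 ha; have b0 := odd_gt0 hb.
rewrite [in X in \sum_(0 <= n < X) _]mulnC sum_dvd // s5E // mulr_sumr.
rewrite big_ltn // [in RHS]big_ltn // /saw /= mul0n mulr0 mulr0 add0r.
rewrite {1}/hh !div0n addn0 expr0 mulr1 add0r addrC; congr (_ + _).
apply: eq_big_nat => r /andP[r1 _].
rewrite /hh mulnK // [(r * a)%N]mulnC (_ : (r == 0)%N = false); last by case: (r) r1.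
have bn0 : (b%:R : rat) != 0 by rewrite pnatr_eq0 -lt0n.
by rewrite !natrM; field.
Qed.

Lemma hh_sym a b n : hh a b n = hh b a n.
Proof. by rewrite /hh addnC. Qed.

Lemma hh_both a b n : odd a -> odd b -> (a %| n)%N -> (b %| n)%N -> hh a b n = 1.
Proof.
move=> ha hb; rewrite /dvdn => /eqP na /eqP nb.
rewrite /hh (@sign_odd_eq _ 0%N) ?expr0 //.
by rewrite oddD !odd_div_odd // na nb /= addbF addbb.
Qed.

Lemma partC a b : odd a -> odd b ->
  \sum_(0 <= n < a * b) (n%:R - (a * b)%:R / 2) * hh a b n * ((a %| n)%:R * (b %| n)%:R)
  = - ((a * b)%:R / 2).
Proof.
move=> ha hb; set N := (a * b)%N.
have aN : (a %| N)%N by rewrite dvdn_mulr.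
have bN : (b %| N)%N by rewrite dvdn_mull.
pose F n : rat := (n%:R - N%:R / 2) * ((a %| n)%:R * (b %| n)%:R).
transitivity (\sum_(0 <= n < N) F n).
  apply: eq_bigr => n _; rewrite /F.
  case an: (a %| n)%N; case bn: (b %| n)%N; rewrite ?mul0r ?mulr0 //.
  by rewrite hh_both // mulr1.
have S0 : \sum_(0 <= n < N.+1) F n = 0.
  have e : \sum_(0 <= n < N.+1) F n = - \sum_(0 <= n < N.+1) F n.
    rewrite {1}big_nat_rev /= -sumrN; apply: eq_big_nat => i /andP[_ iN].
    rewrite add0n subSS /F dvdn_subr // dvdn_subr // natrB //.
    by field.
  move: e; set x := \sum_(_ <= _ < _) _; move=> e.
  have : x *+ 2 = 0 by rewrite mulr2n {1}e addNr.
  by move/eqP; rewrite mulrn_eq0 /= => /eqP.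
move: S0; rewrite big_nat_recr //= /F aN bN => S0.
have -> : \sum_(0 <= n < N) F n = - ((N%:R - N%:R / 2) * (true%:R * true%:R)).
  by apply/eqP; rewrite -addr_eq0; apply/eqP.
by rewrite /=; field.
Qed.

Lemma partB a b : odd a -> odd b ->
  \sum_(0 <= n < a * b) (n%:R - (a * b)%:R / 2) * hh a b n * (b %| n)%:R
  = (a * b)%:R * s5 b%:Z a%:Z - (a * b)%:R / 2.
Proof.
move=> ha hb; rewrite mulnC -(@partA b a hb ha); apply: eq_bigr => n _.
by rewrite hh_sym.
Qed.

Theorem corollary1p2 (a b : nat) (ha : odd a) (hb : odd b) :
  s5 a%:Z b%:Z + s5 b%:Z a%:Z
  = 1 / 2 - ((gcdn a b) ^ 2)%:R / (2 * a * b)%:R :> rat.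
Proof.
have a0 := odd_gt0 ha; have b0 := odd_gt0 hb.
set N := (a * b)%N.
have N0 : (N%:R : rat) != 0 by rewrite pnatr_eq0 -lt0n muln_gt0 a0.
have aN : (a %| N)%N by rewrite dvdn_mulr.
have bN : (b %| N)%N by rewrite dvdn_mull.
pose T n := (n%:R - N%:R / 2) * hh a b n * Dn a b n.
have AB := abel (hh a b) N (N%:R / 2).
have hN : hh a b N = 1 by apply: hh_both.
have h0 : hh a b 0 = 1 by apply: hh_both; rewrite ?dvdn0.
have HS := @hsum a b ha hb.
rewrite -/N in HS.
have E1 : \sum_(0 <= m < N) ((m.+1)%:R - N%:R / 2) * (hh a b m.+1 - hh a b m)
    = 2 * \sum_(0 <= m < N) T m.+1.
  rewrite mulr_sumr; apply: eq_bigr => m _; rewrite delta // /T; ring.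
have E2 : \sum_(0 <= m < N) T m.+1 = \sum_(0 <= n < N) T n.
  have T0 : T 0%N = 0 by rewrite /T /Dn !dvdn0 /=; ring.
  have TN : T N = 0 by rewrite /T /Dn aN bN /=; ring.
  have e1 : \sum_(0 <= n < N.+1) T n = T 0%N + \sum_(0 <= m < N) T m.+1 by rewrite big_nat_recl.
  have e2 : \sum_(0 <= n < N.+1) T n = \sum_(0 <= n < N) T n + T N by rewrite big_nat_recr.
  by move: e1 e2; rewrite T0 TN add0r addr0 => <-.
have E3 : \sum_(0 <= n < N) T n =
    \sum_(0 <= n < N) (n%:R - N%:R / 2) * hh a b n * (a %| n)%:R
  + \sum_(0 <= n < N) (n%:R - N%:R / 2) * hh a b n * (b %| n)%:R
  - 2 * \sum_(0 <= n < N) (n%:R - N%:R / 2) * hh a b n * ((a %| n)%:R * (b %| n)%:R).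
  rewrite mulr_sumr -!big_split -sumrB; apply: eq_bigr => n _; rewrite /T /Dn /=; ring.
rewrite partA // partB // partC // in E3.
rewrite E2 E3 in E1. rewrite hN h0 HS subrr mulr0 subr0 mulr1 in AB.
move: AB; rewrite E1 -/N => AB.
have -> : ((2 * a * b)%N%:R : rat) = 2 * N%:R by rewrite /N -mulnA natrM.
move: AB; set X := s5 _ _; set Y := s5 _ _; set G := (_ ^ 2)%:R; move=> AB.
have key : X + Y = (N%:R - G) / (2 * N%:R).
  rewrite -AB; field; by rewrite N0.
rewrite key; field; by rewrite N0.
Qed.
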